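(* Let $(X,\le,S)$ be a finite $S$-poset. The finite nuclear implicative semilattice dual to $(X,\le,S)$ is projective if and only if every antichain $\alpha\subseteq X$ with $\alpha\not\subseteq S$ has a cover.
   Context: A nuclear implicative semilattice is an algebra $(A,\top,\wedge,\to,\ell)$ where $(A,\top,\wedge,\to)$ is an implicative semilattice (the $\{\top,\wedge,\to\}$-subreducts of Heyting algebras) and $\ell$ is a nucleus: $x\le\ell x$, $\ell(x\wedge y)=\ell x\wedge\ell y$, $\ell\ell x\le\ell x$. They form a locally finite variety. An $S$-poset is a triple $(X,\le,S)$ with $(X,\le)$ a poset and $S\subseteq X$. A morphism $f:(X,\le,S)\to(Y,\le,T)$ is a partial map with domain $dom(f)$ such that: (i) if $x<y$ and $x,y\in dom(f)$ then $f(x)<f(y)$; (ii) if $x\in dom(f)$ and $f(x)<y$ then there is $x'\in dom(f)$ with $x<x'$ and $f(x')=y$; (iii) $f^{-1}(T)=dom(f)\cap S$; (iv) if $s\in S$, $s\le x$, $x\in dom(f)$, then there are $s',x'\in dom(f)$ with $s\le s'\le x'$, $s'\in S$ and $f(x')=f(x)$. The category of finite nuclear implicative semilattices is dually equivalent to the category of finite $S$-posets with these morphisms (a known duality, used as given); under it, a homomorphism is injective iff its dual morphism is surjective, and surjective iff its dual is injective and totally defined. An algebra $P$ is projective if for every surjective homomorphism $e:\mathcal B\to\mathcal C$ and homomorphism $g:P\to\mathcal C$ there is $h$ with $e\circ h=g$ (for finite algebras in a locally finite variety it suffices to consider finite $\mathcal B,\mathcal C$). An antichain is a set of pairwise $\le$-incomparable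 elements; a cover of an antichain $\alpha$ is an element $s\in S$ whose set of immediate successors is exactly $\alpha$. *)

(* Defs.v *)
From mathcomp Require Import all_boot.
Set Implicit Arguments. Unset Strict Implicit. Unset Printing Implicit Defensive.

Record nis_ops := NisOps {
  car :> finType;
  ntop : car;
  nmeet : car -> car -> car;
  nimp : car -> car -> car;
  nnuc : car -> car }.

Definition nle (A : nis_ops) (x y : A) : Prop := nmeet x y = x.

Definition is_nis (A : nis_ops) : Prop :=
  (forall x y z : A, nmeet x (nmeet y z) = nmeet (nmeet x y) z) /\
  (forall x y : A, nmeet x y = nmeet y x) /\
  (forall x : A, nmeet x x = x) /\
  (forall x : A, nmeet x (ntop A) = x) /\
  (forall x y z : A, nle (nmeet x y) z <-> nle x (nimp y z)) /\
  (forall x : A, nle x (nnuc x)) /\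
  (forall x y : A, nnuc (nmeet x y) = nmeet (nnuc x) (nnuc y)) /\
  (forall x : A, nle (nnuc (nnuc x)) (nnuc x)).

Definition is_hom (A B : nis_ops) (f : A -> B) : Prop :=
  [/\ f (ntop A) = ntop B,
      (forall x y, f (nmeet x y) = nmeet (f x) (f y)),
      (forall x y, f (nimp x y) = nimp (f x) (f y))
    & (forall x, f (nnuc x) = nnuc (f x))].

(* Projectivity of a finite algebra P; by local finiteness of the variety it
   suffices (as stated in the paper) to test against finite B, C. *)
Definition projective (P : nis_ops) : Prop :=
  forall (B C : nis_ops), is_nis B -> is_nis C ->
  forall (e : B -> C) (g : P -> C),
    is_hom e -> (forall c : C, exists b : B, e b = c) -> is_hom g ->
    exists h : P -> B, is_hom h /\ (forall p : P, e (h p) = g p).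

Record SPoset := MkSPoset {
  pt :> finType;
  ple : rel pt;
  ple_refl : forall x, ple x x;
  ple_anti : forall x y, ple x y -> ple y x -> x = y;
  ple_trans : forall x y z, ple x y -> ple y z -> ple x z;
  pS : {set pt} }.

Section Dual.
Variable P : SPoset.

Definition is_upset (U : {set P}) : bool :=
  [forall x, forall y, ((x \in U) && ple x y) ==> (y \in U)].

Definition upsets := {U : {set P} | is_upset U}.

Lemma upsetP (U : {set P}) :
  reflect (forall x y, x \in U -> ple x y -> y \in U) (is_upset U).
Proof.
apply: (iffP forallP) => [H x y xU lxy | H x].
  by move: (H x) => /forallP /(_ y) /implyP; apply; rewrite xU.
by apply/forallP => y; apply/implyP => /andP [] /H; apply.
Qed.

Lemma upset_setT : is_upset setT.
Proof. by apply/upsetP => x y; rewrite !inE. Qed.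

Lemma upset_setI (U V : {set P}) : is_upset U -> is_upset V -> is_upset (U :&: V).
Proof.
move=> /upsetP hU /upsetP hV; apply/upsetP => x y; rewrite !inE => /andP [xU xV] lxy.
by rewrite (hU x y) // (hV x y).
Qed.

Definition imp_set (U V : {set P}) : {set P} :=
  [set x | [forall y, ple x y ==> (y \in U) ==> (y \in V)]].

Lemma upset_imp U V : is_upset (imp_set U V).
Proof.
apply/upsetP => x y; rewrite !inE => /forallP H lxy; apply/forallP => z.
apply/implyP => lyz; apply: (implyP (H z)); exact: ple_trans lxy lyz.
Qed.

Definition nuc_set (U : {set P}) : {set P} :=
  [set x | [forall s in pS P, ple x s ==> (s \in U)]].

Lemma upset_nuc U : is_upset (nuc_set U).
Proof.
apply/upsetP => x y; rewrite !inE => /forallP H lxy; apply/forallP => s.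
apply/implyP => sS; apply/implyP => lys.
move: (H s); rewrite sS /= => /implyP; apply; exact: ple_trans lxy lys.
Qed.

Definition dual_ops : nis_ops :=
  @NisOps upsets
    (exist _ setT upset_setT)
    (fun U V => exist _ (val U :&: val V) (upset_setI (valP U) (valP V)))
    (fun U V => exist _ (imp_set (val U) (val V)) (upset_imp (val U) (val V)))
    (fun U => exist _ (nuc_set (val U)) (upset_nuc (val U))).

End Dual.

Definition plt (P : SPoset) (x y : P) : bool := (x != y) && ple x y.

Definition antichain (P : SPoset) (a : {set P}) : Prop :=
  forall x y, x \in a -> y \in a -> ple x y -> x = y.

Definition imm_succ (P : SPoset) (x : P) : {set P} :=
  [set y | plt x y && ~~ [exists z, plt x z && plt z y]].

Definition has_cover (P : SPoset) (a : {set P}) : Prop :=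
  exists s, s \in pS P /\ imm_succ s = a.

(* Main.v *)
Require Import Defs.
From mathcomp Require Import all_boot.
Set Implicit Arguments. Unset Strict Implicit. Unset Printing Implicit Defensive.

Lemma exists_max (T : finType) (r : rel T) (P : pred T) (x0 : T) :
  (forall x y z, r x y -> r y z -> r x z) -> P x0 ->
  exists2 x, P x & forall y, P y -> r x y -> r y x.
Proof.
move=> rt Px0.
pose up x := [set y | r x y && ~~ r y x].
case: (@arg_minnP _ x0 P (fun i => #|up i|) Px0) => x Px xmin.
exists x => // y Py rxy; apply/negPn/negP => nryx.
have: #|up y| < #|up x|.
  apply: proper_card; apply/properP; split.
    apply/subsetP => z; rewrite !inE => /andP [ryz nrzy].
    rewrite (rt _ _ _ rxy ryz) /=; apply/negP => rzx; case/negP: nrzy; exact: rt rzx rxy.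
  exists y; first by rewrite inE rxy.
  by rewrite inE; case: (r y y).
by rewrite ltnNge xmin.
Qed.

Existing Class is_nis.

Section NIS.
Context {A : nis_ops} {HA : is_nis A}.

Definition leb (x y : A) : bool := nmeet x y == x.
Lemma lebP x y : reflect (nle x y) (leb x y).
Proof. exact: eqP. Qed.

Lemma mA (x y z : A) : nmeet x (nmeet y z) = nmeet (nmeet x y) z.
Proof. by case: HA. Qed.
Lemma mC (x y : A) : nmeet x y = nmeet y x.
Proof. by case: HA => _ []. Qed.
Lemma mI (x : A) : nmeet x x = x.
Proof. by case: HA => _ [] _ []. Qed.
Lemma mT (x : A) : nmeet x (ntop A) = x.
Proof. by case: HA => _ [] _ [] _ []. Qed.
Lemma adj (x y z : A) : nle (nmeet x y) z <-> nle x (nimp y z).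
Proof. by case: HA => _ [] _ [] _ [] _ []. Qed.
Lemma nuc_ext (x : A) : nle x (nnuc x).
Proof. by case: HA => _ [] _ [] _ [] _ [] _ []. Qed.
Lemma nuc_meet (x y : A) : nnuc (nmeet x y) = nmeet (nnuc x) (nnuc y).
Proof. by case: HA => _ [] _ [] _ [] _ [] _ [] _ []. Qed.
Lemma nuc_nuc_le (x : A) : nle (nnuc (nnuc x)) (nnuc x).
Proof. by case: HA => _ [] _ [] _ [] _ [] _ [] _ []. Qed.

Lemma le_refl (x : A) : nle x x.
Proof. exact: mI. Qed.
Lemma le_trans (x y z : A) : nle x y -> nle y z -> nle x z.
Proof. rewrite /nle => h1 h2. by rewrite -h1 -mA h2. Qed.
Lemma le_anti (x y : A) : nle x y -> nle y x -> x = y.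
Proof. rewrite /nle => h1 h2. by rewrite -h1 mC h2. Qed.
Lemma le_top (x : A) : nle x (ntop A).
Proof. exact: mT. Qed.
Lemma meet_l (x y : A) : nle (nmeet x y) x.
Proof. by rewrite /nle mC mA mI. Qed.
Lemma meet_r (x y : A) : nle (nmeet x y) y.
Proof. by rewrite /nle -mA mI. Qed.
Lemma meet_glb (x y z : A) : nle z x -> nle z y -> nle z (nmeet x y).
Proof. rewrite /nle => h1 h2. by rewrite mA h1 h2. Qed.
Lemma meet_mono (x y x' y' : A) : nle x x' -> nle y y' -> nle (nmeet x y) (nmeet x' y').
Proof.
move=> h1 h2; apply: meet_glb; [apply: le_trans (meet_l _ _) h1 | apply: le_trans (meet_r _ _) h2].
Qed.
Lemma top_le (x : A) : nle (ntop A) x -> x = ntop A.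
Proof. move=> h; apply: le_anti => //; exact: le_top. Qed.
Lemma mp (x y : A) : nle (nmeet x (nimp x y)) y.
Proof. by rewrite mC; apply/adj; apply: le_refl. Qed.
Lemma le_imp (x y : A) : nle y (nimp x y).
Proof. apply/adj; exact: meet_l. Qed.
Lemma imp_top (x y : A) : nle x y -> nimp x y = ntop A.
Proof. move=> h; apply: top_le; apply/adj. rewrite mC mT. exact: h. Qed.
Lemma imp_topE (x y : A) : nimp x y = ntop A -> nle x y.
Proof.
move=> h; have: nle (ntop A) (nimp x y) by rewrite h; exact: le_refl.
move/adj; by rewrite mC mT.
Qed.
Lemma nuc_mono (x y : A) : nle x y -> nle (nnuc x) (nnuc y).
Proof. rewrite /nle => h. by rewrite -nuc_meet h. Qed.
Lemma nuc_nuc (x : A) : nnuc (nnuc x) = nnuc x.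
Proof. apply: le_anti; [exact: nuc_nuc_le | exact: nuc_ext]. Qed.

Definition mi (m : A) : bool :=
  (m != ntop A) && [forall x, forall y, (nmeet x y == m) ==> (x == m) || (y == m)].

Lemma miP (m : A) : mi m -> m <> ntop A /\ forall x y, nmeet x y = m -> x = m \/ y = m.
Proof.
case/andP => /eqP h /forallP H; split => // x y e.
move: (H x) => /forallP /(_ y); rewrite e eqxx /= => /orP [] /eqP; by [left|right].
Qed.

Lemma mi_split (m u : A) : mi m -> m = nimp u m \/ nle u m.
Proof.
move=> /miP [_ H].
have e : nmeet (nimp u m) (nimp (nimp u m) m) = m.
  apply: le_anti; first exact: mp.
  apply: meet_glb; apply: le_imp.
case: (H _ _ e) => [e1|h]; first by left.
right; apply: (@le_trans _ (nimp (nimp u m) m)); last by rewrite h; exact: le_refl.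
apply/adj; exact: mp.
Qed.

Lemma mi_prime (m x y : A) : mi m -> nle (nmeet x y) m -> nle x m \/ nle y m.
Proof.
move=> hm hxy; case: (mi_split x hm) => [e|]; last by left.
right; rewrite e; apply/adj; by rewrite mC.
Qed.

Lemma mi_ntop (m : A) : mi m -> ~ nle (ntop A) m.
Proof. by move=> /miP [h _] /top_le. Qed.

Definition bigm (s : seq A) : A := foldr (@nmeet A) (ntop A) s.

Lemma bigm_le (s : seq A) x : x \in s -> nle (bigm s) x.
Proof.
elim: s => // a s IH; rewrite inE /= => /orP [/eqP ->|h]; first exact: meet_l.
apply: le_trans (meet_r _ _) (IH h).
Qed.
Lemma bigm_glb (s : seq A) z : (forall x, x \in s -> nle z x) -> nle z (bigm s).
Proof.
elim: s => [|a s IH] h /=; first exact: le_top.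
apply: meet_glb; first by apply: h; rewrite inE eqxx.
apply: IH => x xs; apply: h; by rewrite inE xs orbT.
Qed.
Lemma bigm_prime (s : seq A) m : mi m -> nle (bigm s) m -> exists2 x, x \in s & nle x m.
Proof.
move=> hm; elim: s => [|a s IH] /=; first by move/(mi_ntop hm).
case/(mi_prime hm) => [h|/IH [x xs h]]; first by exists a; rewrite ?inE ?eqxx.
by exists x; rewrite // inE xs orbT.
Qed.

Lemma mi_sep (b c : A) : ~ nle b c -> exists m, [/\ mi m, nle c m & ~ nle b m].
Proof.
move=> nbc.
have := @exists_max A leb (fun w => leb c w && ~~ leb b w) c.
case.
- by move=> x y z /lebP h1 /lebP h2; apply/lebP; apply: le_trans h1 h2.
- by rewrite (introT (lebP _ _) (le_refl c)) /=; apply/negP => /lebP.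
move=> m /andP [/lebP cm /negP bm] mmax.
have mmax' : forall w, nle m w -> ~ nle b w -> w = m.
  move=> w mw bw; apply: le_anti; last exact: mw.
  apply/lebP; apply: mmax; last by apply/lebP.
  rewrite (introT (lebP _ _) (le_trans cm mw)) /=; by apply/negP => /lebP.
exists m; split => //; last by move=> h; apply: bm; apply/lebP.
apply/andP; split.
  apply/eqP => e; apply: bm; apply/lebP; rewrite e; exact: le_top.
apply/forallP => x; apply/forallP => y; apply/implyP => /eqP e.
have mx : nle m x by rewrite -e; exact: meet_l.
have my : nle m y by rewrite -e; exact: meet_r.
case: (lebP b x) => [bx|bx]; last by rewrite (mmax' _ mx bx) eqxx.
case: (lebP b y) => [by_|by_]; last by rewrite (mmax' _ my by_) eqxx orbT.
exfalso; apply: bm; apply/lebP; rewrite -e; exact: meet_glb.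
Qed.

End NIS.

Section DualNis.
Variable Q : SPoset.

Lemma in_imp (U V : {set Q}) x :
  (x \in imp_set U V) = [forall y, ple x y ==> (y \in U) ==> (y \in V)].
Proof. by rewrite inE. Qed.

Lemma in_impP (U V : {set Q}) x :
  reflect (forall y, ple x y -> y \in U -> y \in V) (x \in imp_set U V).
Proof.
rewrite in_imp; apply: (iffP forallP) => H y.
  by move=> h1 h2; move: (H y); rewrite h1 h2.
by apply/implyP => h1; apply/implyP; apply: H.
Qed.

Lemma in_nucP (U : {set Q}) x :
  reflect (forall s, s \in pS Q -> ple x s -> s \in U) (x \in nuc_set U).
Proof.
rewrite inE; apply: (iffP forallP) => H s.
  by move=> h1 h2; move: (H s); rewrite h1 h2.
by apply/implyP => h1; apply/implyP; apply: H.
Qed.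

Lemma upW (U : upsets Q) x y : x \in val U -> ple x y -> y \in val U.
Proof. by move: (valP U) => /upsetP; apply. Qed.

Lemma dual_nle (U V : dual_ops Q) : nle U V <-> val U \subset val V.
Proof.
rewrite /nle; split.
  by move=> e; rewrite -e /=; apply: subsetIr.
move=> h; apply: val_inj => /=; apply/setIidPl; exact: h.
Qed.

#[export] Instance dual_is_nis : is_nis (dual_ops Q).
Proof.
split; first by move=> x y z; apply: val_inj => /=; rewrite setIA.
split; first by move=> x y; apply: val_inj => /=; rewrite setIC.
split; first by move=> x; apply: val_inj => /=; rewrite setIid.
split; first by move=> x; apply: val_inj => /=; rewrite setIT.
split.
  move=> x y z; split => /dual_nle /= h; apply/dual_nle => /=.
    apply/subsetP => a ax; apply/in_impP => b ab by_.
    have bx : b \in val x by apply: upW ax ab.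
    by apply: (subsetP h); rewrite inE bx.
  apply/subsetP => a; rewrite inE => /andP [ax ay].
  by move/subsetP: h => /(_ a ax) /in_impP; apply => //; exact: ple_refl.
split.
  move=> x; apply/dual_nle => /=; apply/subsetP => a ax; apply/in_nucP => s _ as_.
  by apply: upW ax as_.
split.
  move=> x y; apply: val_inj => /=; apply/setP => a; rewrite [in RHS]inE.
  apply/in_nucP/andP => [H|[/in_nucP H1 /in_nucP H2]].
    by split; apply/in_nucP => s sS as_; move: (H s sS as_); rewrite inE => /andP [].
  by move=> s sS as_; rewrite inE H1 ?H2.
move=> x; apply/dual_nle => /=; apply/subsetP => a /in_nucP H; apply/in_nucP => s sS as_.
by move: (H s sS as_) => /in_nucP; apply => //; exact: ple_refl.
Qed.

End DualNis.

Section Rep.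
Context {D : nis_ops} {HD : is_nis D}.

Definition Ypt := {m : D | mi m}.

Definition Yle (p q : Ypt) : bool := leb (val q) (val p).

Lemma Yle_refl p : Yle p p.
Proof. apply/lebP; exact: le_refl. Qed.
Lemma Yle_anti p q : Yle p q -> Yle q p -> p = q.
Proof. move=> /lebP h1 /lebP h2; apply: val_inj; exact: le_anti. Qed.
Lemma Yle_trans p q r : Yle p q -> Yle q r -> Yle p r.
Proof. move=> /lebP h1 /lebP h2; apply/lebP; exact: le_trans h2 h1. Qed.

Definition Ysp : SPoset :=
  @MkSPoset Ypt Yle Yle_refl Yle_anti Yle_trans [set p : Ypt | nnuc (val p) == val p].

Definition phis (b : D) : {set Ysp} := [set p : Ysp | ~~ leb b (val p)].

Lemma phis_up b : is_upset (phis b).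
Proof.
apply/upsetP => p q; rewrite !inE => h /lebP qp; apply: contra h => /lebP h.
apply/lebP; exact: le_trans h qp.
Qed.

Definition phi (b : D) : dual_ops Ysp := exist _ (phis b) (phis_up b).

Lemma in_phis b (p : Ysp) : (p \in phis b) = ~~ leb b (val p).
Proof. by rewrite inE. Qed.

Lemma phi_top : phi (ntop D) = ntop (dual_ops Ysp).
Proof.
apply: val_inj; apply/setP => p /=; rewrite in_phis inE.
by apply/negP => /lebP; apply: mi_ntop (valP p).
Qed.

Lemma phi_meet x y : phi (nmeet x y) = nmeet (phi x) (phi y).
Proof.
apply: val_inj; apply/setP => p /=; rewrite !inE.
apply/idP/idP.
  move=> h; apply/andP; split; apply: contra h => /lebP h; apply/lebP.
    exact: le_trans (meet_l _ _) h.
  exact: le_trans (meet_r _ _) h.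
case/andP => /negP h1 /negP h2; apply/negP => /lebP h.
by case: (mi_prime (valP p) h) => /lebP.
Qed.

Definition jof (p : Ysp) : D := bigm [seq b <- enum D | ~~ leb b (val p)].

Lemma jof_nle p : ~ nle (jof p) (val p).
Proof.
move=> /(bigm_prime (valP p)) [b]; rewrite mem_filter => /andP [/negP h _] /lebP //.
Qed.

Lemma jof_le p b : ~ nle b (val p) -> nle (jof p) b.
Proof.
move=> h; apply: bigm_le; rewrite mem_filter mem_enum andbT; by apply/negP => /lebP.
Qed.

Lemma phi_imp x y : phi (nimp x y) = nimp (phi x) (phi y).
Proof.
apply: val_inj; apply/setP => p /=; rewrite in_phis.
apply/idP/(@in_impP Ysp (phis x) (phis y) p).
  move=> /negP h q pq; rewrite !in_phis => /negP hx; apply/negP => /lebP hy.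
  case: (mi_prime (valP q) (le_trans (mp x y) hy)) => /lebP //.
  move=> /lebP hq; apply: h; apply/lebP; apply: le_trans hq _; exact/lebP.
move=> H; apply/negP => /lebP hp.
have jx : ~ nle (nmeet (jof p) x) y.
  move=> /adj h; apply: (jof_nle (p:=p)); exact: le_trans h hp.
case: (mi_sep jx) => m [mm ym jxm].
pose q : Ysp := exist _ m mm.
have qp : ple p q.
  rewrite /= /Yle /=; case: (lebP m (val p)) => // h.
  exfalso; apply: jxm; apply: le_trans (meet_l _ _) _; exact: jof_le.
have hx : q \in phis x.
  rewrite in_phis; apply/negP => /lebP h; apply: jxm; exact: le_trans (meet_r _ _) h.
by move: (H q qp hx); rewrite in_phis => /negP; apply; apply/lebP.
Qed.

Lemma phi_nuc x : phi (nnuc x) = nnuc (phi x).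
Proof.
apply: val_inj; apply/setP => p /=; rewrite in_phis.
apply/idP/(@in_nucP Ysp (phis x) p).
  move=> /negP h s; rewrite inE => /eqP sf ps; rewrite in_phis; apply/negP => /lebP xs.
  apply: h; apply/lebP; apply: le_trans (nuc_mono xs) _; rewrite sf; exact/lebP.
move=> H; apply/negP => /lebP hp.
have := @exists_max D leb (fun w => (nnuc w == w) && leb x w && leb w (val p)) (nnuc x).
case.
- by move=> a b c /lebP h1 /lebP h2; apply/lebP; apply: le_trans h1 h2.
- rewrite nuc_nuc eqxx /=; apply/andP; split; apply/lebP => //; exact: nuc_ext.
move=> s /andP [/andP [/eqP sf /lebP xs] /lebP sp] smax.
have smi : mi s.
  apply/andP; split.
    apply/eqP => e; apply: (mi_ntop (valP p)); by rewrite -e.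
  apply/forallP => u; apply/forallP => v; apply/implyP => /eqP e.
  have key : forall w, nle s w -> nle (nnuc w) (val p) -> w = s.
    move=> w sw wp; apply: le_anti; last exact: sw.
    apply: le_trans (nuc_ext w) _; apply/lebP; apply: smax; last first.
      apply/lebP; apply: le_trans sw (nuc_ext w).
    rewrite nuc_nuc eqxx /=; apply/andP; split; apply/lebP => //.
    apply: le_trans xs (le_trans sw (nuc_ext w)).
  have : nle (nmeet (nnuc u) (nnuc v)) (val p) by rewrite -nuc_meet e sf.
  case/(mi_prime (valP p)) => h.
    by rewrite (key u _ h) ?eqxx // -e; exact: meet_l.
  by rewrite (key v _ h) ?eqxx ?orbT // -e; exact: meet_r.
pose q : Ysp := exist _ s smi.
have : q \in phis x.
  apply: H; first by rewrite inE /= sf.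
  by rewrite /= /Yle /=; apply/lebP.
by rewrite in_phis => /negP; apply; apply/lebP.
Qed.

Lemma phi_hom : is_hom phi.
Proof. split; [exact: phi_top | exact: phi_meet | exact: phi_imp | exact: phi_nuc]. Qed.

Lemma phi_inj : injective phi.
Proof.
have H : forall b c, phi b = phi c -> nle b c.
  move=> b c e; case: (lebP b c) => // nbc; exfalso.
  case: (mi_sep nbc) => m [mm cm bm].
  have : (exist _ m mm : Ysp) \in phis b by rewrite in_phis; apply/negP => /lebP.
  have -> : phis b = phis c by move: (congr1 val e).
  by rewrite in_phis => /negP; apply; apply/lebP.
move=> b c e; apply: le_anti; apply: H => //.
Qed.

Definition psi (U : dual_ops Ysp) : D := bigm [seq val q | q <- enum (~: val U)].

Lemma phi_psi U : phi (psi U) = U.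
Proof.
apply: val_inj; apply/setP => p /=; rewrite in_phis.
case pU: (p \in val U).
  apply/negP => /lebP /(bigm_prime (valP p)) [b /mapP [q]].
  rewrite mem_enum inE => qU -> qp.
  have : q \in val U by apply: upW pU _; rewrite /= /Yle; apply/lebP.
  by rewrite (negbTE qU).
have h : nle (psi U) (val p).
  by apply: bigm_le; apply/mapP; exists p => //; rewrite mem_enum inE pU.
by move/lebP: h => ->.
Qed.

End Rep.

Lemma inv_hom (A B : nis_ops) {HA : is_nis A} {HB : is_nis B} (f : A -> B) (g : B -> A) :
  is_hom f -> injective f -> (forall b, f (g b) = b) -> is_hom g.
Proof.
move=> [ft fm fi fn] finj fg; split.
- by apply: finj; rewrite fg ft.
- by move=> x y; apply: finj; rewrite fm !fg.
- by move=> x y; apply: finj; rewrite fi !fg.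
- by move=> x; apply: finj; rewrite fn !fg.
Qed.

Lemma hom_mono (A B : nis_ops) (f : A -> B) x y : is_hom f -> nle x y -> nle (f x) (f y).
Proof. by case=> _ fm _ _; rewrite /nle => e; rewrite -fm e. Qed.

Lemma hom_comp (A B C : nis_ops) (f : A -> B) (g : B -> C) :
  is_hom f -> is_hom g -> is_hom (fun x => g (f x)).
Proof.
move=> [ft fm fi fn] [gt gm gi gn]; split.
- by rewrite ft gt.
- by move=> x y; rewrite fm gm.
- by move=> x y; rewrite fi gi.
- by move=> x; rewrite fn gn.
Qed.

Section PMap.
Variables (X Y : SPoset) (f : Y -> option X).

Definition hfs (U : {set X}) : {set Y} :=
  [set p | [forall q, ple p q ==> (if f q is Some x then x \in U else true)]].

Lemma in_hfP (U : {set X}) p : reflect (forall q x, ple p q -> f q = Some x -> x \in U) (p \in hfs U).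
Proof.
rewrite inE; apply: (iffP forallP) => H.
  by move=> q x pq fq; move: (H q); rewrite pq fq.
move=> q; apply/implyP => pq; case fq: (f q) => [x|] //; exact: H fq.
Qed.

Lemma hfs_up (U : {set X}) : is_upset (hfs U).
Proof.
apply/upsetP => p q /in_hfP H pq; apply/in_hfP => r x qr fr.
exact: H (ple_trans pq qr) fr.
Qed.

Definition hf (U : dual_ops X) : dual_ops Y := exist _ (hfs (val U)) (hfs_up (val U)).

Hypothesis Fmono : forall p q x y, ple p q -> f p = Some x -> f q = Some y -> ple x y.
Hypothesis Fup : forall p x y, f p = Some x -> ple x y -> exists2 q, ple p q & f q = Some y.
Hypothesis FS : forall p x, f p = Some x -> (x \in pS X) = (p \in pS Y).
Hypothesis FIV : forall s x y, s \in pS Y -> ple s x -> f x = Some y ->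
  exists s', exists x', [/\ s' \in pS Y, ple s s', ple s' x', f s' != None & f x' = Some y].

Lemma hf_hom : is_hom hf.
Proof.
split.
- apply: val_inj; apply/setP => p /=; rewrite [in RHS]inE; apply/in_hfP => q x _ _; by rewrite inE.
- move=> U V; apply: val_inj; apply/setP => p /=; rewrite [in RHS]inE.
  apply/in_hfP/andP => [H|[/in_hfP H1 /in_hfP H2]].
    split; apply/in_hfP => q x pq fq; move: (H q x pq fq); rewrite inE => /andP [] //.
  by move=> q x pq fq; rewrite inE (H1 q x pq fq) (H2 q x pq fq).
- move=> U V; apply: val_inj; apply/setP => p /=.
  apply/in_hfP/(@in_impP Y (hfs (val U)) (hfs (val V)) p) => [H|H].
    move=> q pq /in_hfP HU; apply/in_hfP => r x qr fr.
    have := H r x (ple_trans pq qr) fr; move/(@in_impP X); apply; first exact: ple_refl.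
    exact: HU qr fr.
  move=> q x pq fq; apply/(@in_impP X) => w xw wU.
  case: (Fup fq xw) => q' qq' fq'.
  have : q' \in hfs (val U).
    apply/in_hfP => r z q'r fr; apply: upW wU _; exact: Fmono q'r fq' fr.
  move/(H q' (ple_trans pq qq')) => /in_hfP; apply; [exact: ple_refl | exact: fq'].
- move=> U; apply: val_inj; apply/setP => p /=.
  apply/in_hfP/(@in_nucP Y (hfs (val U)) p) => [H|H].
    move=> t tS pt; apply/in_hfP => r x tr fr.
    case: (FIV tS tr fr) => s' [x'] [s'S ts' s'x' fs' fx'].
    case fs'E: (f s') fs' => [y|] // _.
    have yS : y \in pS X by rewrite (FS fs'E).
    have := H s' y (ple_trans pt ts') fs'E; move/(@in_nucP X) => /(_ y yS (ple_refl _)) yU.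
    apply: upW yU _; exact: Fmono s'x' fs'E fx'.
  move=> q x pq fq; apply/(@in_nucP X) => s sS xs.
  case: (Fup fq xs) => q' qq' fq'.
  have q'S : q' \in pS Y by rewrite -(FS fq').
  move: (H q' q'S (ple_trans pq qq')) => /in_hfP; apply; [exact: ple_refl | exact: fq'].
Qed.

End PMap.

Section PosetLemmas.
Variable X : SPoset.

Definition minset (A : {set X}) : {set X} :=
  [set a in A | [forall t in A, ple t a ==> (t == a)]].

Lemma min_below (A : {set X}) t : t \in A -> exists2 a, a \in minset A & ple a t.
Proof.
move=> tA.
have := @exists_max X (fun a b => ple b a) (fun a => (a \in A) && ple a t) t.
case.
- by move=> a b c h1 h2; exact: ple_trans h2 h1.
- by rewrite tA ple_refl.
move=> a /andP [aA at_] amax; exists a => //.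
rewrite inE aA /=; apply/forallP => u; apply/implyP => uA; apply/implyP => ua.
apply/eqP; apply: ple_anti => //; apply: amax => //.
by rewrite uA (ple_trans ua at_).
Qed.

Lemma minset_sub (A : {set X}) : minset A \subset A.
Proof. by apply/subsetP => a; rewrite inE => /andP []. Qed.

Lemma minset_anti (A : {set X}) : antichain (minset A).
Proof.
move=> x y; rewrite !inE => /andP [xA _] /andP [yA /forallP H] xy.
by move: (H x); rewrite xA xy /= => /eqP.
Qed.

Lemma imm_below (c y : X) : plt c y -> exists2 a, a \in imm_succ c & ple a y.
Proof.
move=> cy.
have := @exists_max X (fun a b => ple b a) (fun a => plt c a && ple a y) y.
case.
- by move=> a b d h1 h2; exact: ple_trans h2 h1.
- by rewrite cy ple_refl.
move=> a /andP [ca ay] amax; exists a => //.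
rewrite inE ca /=; apply/negP => /existsP [z /andP [cz /andP [za1 za2]]].
have := amax z; rewrite cz (ple_trans za2 ay) /= => /(_ isT za2) az.
by move: za1; rewrite (ple_anti za2 az) eqxx.
Qed.

Lemma imm_plt (c a : X) : a \in imm_succ c -> plt c a.
Proof. by rewrite inE => /andP []. Qed.

End PosetLemmas.

Section Core.
Context {D : nis_ops} {HD : is_nis D}.
Variable X : SPoset.
Variable e : D -> dual_ops X.
Hypothesis ehom : is_hom e.
Hypothesis esurj : forall U, exists b, e b = U.
Hypothesis cover : forall a : {set X}, antichain a -> ~~ (a \subset pS X) -> has_cover a.

Local Notation Y := (@Ysp D HD).
Local Notation E b := (val (e b)).

Lemma E_mono b c : nle b c -> E b \subset E c.
Proof. by move=> h; apply/dual_nle; apply: hom_mono. Qed.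
Lemma E_top : E (ntop D) = setT.
Proof. by case: ehom => -> _ _ _. Qed.
Lemma E_meet b c : E (nmeet b c) = E b :&: E c.
Proof. by case: ehom => _ -> _ _. Qed.
Lemma E_imp b c : E (nimp b c) = imp_set (E b) (E c).
Proof. by case: ehom => _ _ -> _. Qed.
Lemma E_nuc b : E (nnuc b) = nuc_set (E b).
Proof. by case: ehom => _ _ _ ->. Qed.
Lemma E_surj (U : {set X}) : is_upset U -> exists b, E b = U.
Proof. move=> hU; case: (esurj (exist _ U hU)) => b eb; exists b; by rewrite eb. Qed.

Lemma imp_set_sub (U V : {set X}) : U \subset V -> imp_set U V = setT.
Proof.
move=> h; apply/setP => x; rewrite [in RHS]inE; apply/in_impP => y _; exact: (subsetP h).
Qed.
Lemma imp_setT (U : {set X}) : is_upset U -> imp_set setT U = U.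
Proof.
move=> /upsetP hU; apply/setP => x; apply/in_impP/idP => [H|xU y xy _].
  by apply: H (ple_refl _) _; rewrite inE.
exact: hU xU xy.
Qed.

Definition z0 : D := bigm [seq b <- enum D | E b == setT].

Lemma E_z0 : E z0 = setT.
Proof.
rewrite /z0; elim: (enum D) => [|b s IH] /=; first exact: E_top.
case: ifP => // h; rewrite [bigm _]/=. rewrite E_meet IH setIT; exact/eqP.
Qed.

Lemma z0_le b : E b = setT -> nle z0 b.
Proof. move=> h; apply: bigm_le; by rewrite mem_filter h eqxx mem_enum. Qed.

Definition Zp (p : Y) : bool := ~~ leb z0 (val p).

Lemma L_sub (p : Y) b : Zp p -> E b \subset E (val p) -> nle b (val p).
Proof.
move=> /negP zp h.
have : nle z0 (nimp b (val p)).
  apply: z0_le; rewrite E_imp; exact: imp_set_sub.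
move/adj => /(mi_prime (valP p)) [h1|//]; exfalso; apply: zp; exact/lebP.
Qed.

Lemma Zp_up (p q : Y) : Zp p -> ple p q -> Zp q.
Proof.
move=> /negP zp /lebP qp; apply/negP => /lebP h; apply: zp; apply/lebP.
exact: le_trans h qp.
Qed.

Lemma xp_ex (p : Y) : Zp p ->
  exists x, (x \notin E (val p)) && [forall y, (y \notin E (val p)) ==> ple y x].
Proof.
move=> zp.
have [x0 x0p] : exists x0, x0 \notin E (val p).
  case: (pickP (fun x => x \notin E (val p))) => [x hx|h]; first by exists x.
  exfalso; move/negP: zp; apply; apply/lebP; apply: z0_le.
  apply/setP => x; rewrite inE; by move: (h x) => /= /negbFE ->.
have := @exists_max X (@ple X) (fun x => x \notin E (val p)) x0.
case; first exact: ple_trans.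
  exact: x0p.
move=> x xp xmax; exists x; rewrite xp /=; apply/forallP => y; apply/implyP => yp.
case: (boolP (ple y x)) => // nyx; exfalso.
pose V1 := x |: E (val p).
pose M := [set z | ~~ ple z x].
have V1up : is_upset V1.
  apply/upsetP => a b; rewrite !inE => /orP [/eqP ->|ap] ab.
    case: (boolP (b \in E (val p))) => bp; first by apply/orP; right.
    by rewrite (ple_anti (xmax b bp ab) ab) eqxx.
  by apply/orP; right; exact: upW ap ab.
have Mup : is_upset M.
  apply/upsetP => a b; rewrite !inE => h ab; apply: contra h => bx; exact: ple_trans ab bx.
case: (E_surj V1up) => u Eu; case: (E_surj Mup) => v Ev.
have : nle (nmeet u v) (val p).
  apply: L_sub => //; rewrite E_meet Eu Ev; apply/subsetP => z; rewrite !inE.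
  by case/andP => /orP [/eqP ->|//]; rewrite ple_refl.
case/(mi_prime (valP p)) => /E_mono /subsetP h.
  by move: (h x); rewrite Eu !inE eqxx => /(_ isT); apply/negP.
by move: (h y); rewrite Ev !inE nyx => /(_ isT); apply/negP.
Qed.

Definition xp (p : Y) : option X :=
  if Zp p then [pick x | (x \notin E (val p)) && [forall y, (y \notin E (val p)) ==> ple y x]]
  else None.

Lemma xp_some (p : Y) : Zp p -> exists x, xp p = Some x.
Proof.
move=> zp; rewrite /xp zp; case: pickP => [x _|h]; first by exists x.
case: (xp_ex zp) => x hx; by rewrite h in hx.
Qed.

Lemma xp_spec (p : Y) x : xp p = Some x ->
  [/\ Zp p, x \notin E (val p) & forall y, y \notin E (val p) -> ple y x].
Proof.
rewrite /xp; case: ifP => // zp; case: pickP => // x' /andP [h1 /forallP h2] [<-].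
split => // y yp; move: (h2 y); by rewrite yp.
Qed.

Lemma xp_le (p : Y) x b : xp p = Some x -> nle b (val p) <-> x \notin E b.
Proof.
case/xp_spec => zp xp xmax; split.
  move=> /E_mono /subsetP h; apply: contra xp; exact: h.
move=> xb; apply: L_sub => //; apply/subsetP => w wb.
case: (boolP (w \in E (val p))) => // wp; exfalso.
by move/negP: xb; apply; apply: upW wb (xmax w wp).
Qed.

Lemma xp_surj x : exists p, xp p = Some x.
Proof.
pose M := [set z | ~~ ple z x].
have Mup : is_upset M.
  apply/upsetP => a b; rewrite !inE => h ab; apply: contra h => bx; exact: ple_trans ab bx.
case: (E_surj Mup) => v Ev.
pose m := nimp z0 v.
have Em : E m = M by rewrite /m E_imp E_z0 Ev imp_setT.
have xM : x \notin M by rewrite inE ple_refl.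
have key : forall c, nle m c -> x \notin E c -> c = m.
  move=> c mc xc.
  have EcM : E c = M.
    apply/eqP; rewrite eqEsubset; apply/andP; split; last by rewrite -Em; exact: E_mono.
    apply/subsetP => w wc; rewrite inE; apply/negP => wx.
    by move/negP: xc; apply; apply: upW wc wx.
  apply: le_anti => //; rewrite /m; apply/adj; rewrite mC; apply/adj.
  apply: z0_le; rewrite E_imp EcM Ev; apply: imp_set_sub; exact: subxx.
have mmi : mi m.
  apply/andP; split.
    apply/eqP => h; move: xM; by rewrite -Em h E_top inE.
  apply/forallP => a; apply/forallP => b; apply/implyP => /eqP ab.
  case: (boolP (x \in E a)) => xa; last by rewrite (key a _ xa) ?eqxx // -ab; exact: meet_l.
  case: (boolP (x \in E b)) => xb; last by rewrite (key b _ xb) ?eqxx ?orbT // -ab; exact: meet_r.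
  by move: xM; rewrite -Em -ab E_meet inE xa xb.
pose p : Y := exist _ m mmi.
have zp : Zp p.
  apply/negP => /lebP /E_mono; rewrite E_z0 Em => /subsetP /(_ x); rewrite inE => /(_ isT).
  by apply/negP.
case: (xp_some zp) => x' hx'; exists p; rewrite hx'; congr Some.
case: (xp_spec hx') => _ h1 h2; apply: ple_anti.
  by move: h1; rewrite /= Em inE negbK.
by apply: h2; rewrite /= Em.
Qed.

Record Inv (K : {set Y}) (f : Y -> option X) : Prop := {
  iK_up : forall p q, p \in K -> ple p q -> q \in K;
  iK_Z : forall p, Zp p -> p \in K;
  iZ : forall p, Zp p -> f p = xp p;
  iDom : forall p x, f p = Some x -> p \in K;
  iMono : forall p q x y, ple p q -> f p = Some x -> f q = Some y -> ple x y;
  iUp : forall p x y, f p = Some x -> ple x y -> exists2 q, ple p q & f q = Some y;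
  iS : forall p x, f p = Some x -> (x \in pS X) = (p \in pS Y);
  iIV : forall s x y, s \in K -> s \in pS Y -> ple s x -> f x = Some y ->
     exists s', exists x', [/\ s' \in pS Y, ple s s', ple s' x', f s' != None & f x' = Some y]
}.

Lemma Inv0 : Inv [set p | Zp p] xp.
Proof.
split.
- move=> p q; rewrite !inE; exact: Zp_up.
- by move=> p; rewrite inE.
- by [].
- by move=> p x /xp_spec [zp _ _]; rewrite inE.
- move=> p q x y pq hx hy.
  case: (xp_spec hx) => _ xnp _; case: (xp_spec hy) => _ _ ymax.
  apply: ymax; apply: contra xnp; apply/subsetP; apply: E_mono; exact/lebP.
- move=> p x y hx xy; case: (xp_surj y) => q hy; exists q => //.
  rewrite /= /Yle; apply/lebP; apply/(xp_le _ hx).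
  case: (xp_spec hy) => _ ynq _; apply: contra ynq => xq; exact: upW xq xy.
- move=> p x hx; case: (xp_spec hx) => zp xnp xmax; rewrite inE.
  apply/idP/idP => [xS|/eqP fp].
    apply/eqP; apply: le_anti; last exact: nuc_ext.
    apply/(xp_le _ hx); rewrite E_nuc; apply: contra xnp => /in_nucP; apply => //.
    exact: ple_refl.
  case: (boolP (x \in pS X)) => // xnS; exfalso.
  have : x \in E (nnuc (val p)).
    rewrite E_nuc; apply/in_nucP => s sS xs.
    case: (boolP (s \in E (val p))) => // snp.
    by move: sS; rewrite -(ple_anti xs (xmax s snp)) => sS; rewrite sS in xnS.
  by rewrite fp; apply/negP.
- move=> s x y; rewrite inE => zs sS sx hy.
  case: (xp_some zs) => z hz.
  by exists s, x; split => //; [exact: ple_refl | rewrite hz].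
Qed.

Section Step.
Variables (K : {set Y}) (f : Y -> option X) (p0 : Y).
Hypothesis HI : Inv K f.
Hypothesis p0K : p0 \notin K.
Hypothesis p0max : forall q, q \notin K -> ple p0 q -> q = p0.

Definition T : {set X} := [set x | [exists q, ple p0 q && (f q == Some x)]].
Definition alpha := minset T.
Definition cond := (p0 \in pS Y) && ~~ (alpha \subset pS X).
Definition nv : option X :=
  if cond then [pick c | (c \in pS X) && (imm_succ c == alpha)] else None.
Definition f' q := if q == p0 then nv else f q.

Lemma fK q x : f q = Some x -> q != p0.
Proof. move=> /(iDom HI) qK; apply/eqP => eq0; move: p0K; by rewrite -eq0 qK. Qed.

Lemma f'_old q : q != p0 -> f' q = f q.
Proof. by rewrite /f' => /negbTE ->. Qed.

Lemma f'_some q y : f' q = Some y -> (q = p0 /\ nv = Some y) \/ (q != p0 /\ f q = Some y).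
Proof.
rewrite /f'; case: eqP => [->|/eqP h] hy; [by left | by right].
Qed.

Lemma inT x : reflect (exists2 q, ple p0 q & f q = Some x) (x \in T).
Proof.
rewrite inE; apply: (iffP existsP) => [[q /andP [h1 /eqP h2]]|[q h1 h2]]; exists q => //.
by rewrite h1 h2 eqxx.
Qed.

Lemma T_up x y : x \in T -> ple x y -> y \in T.
Proof.
move=> /inT [q pq fq] xy; case: (iUp HI fq xy) => q' qq' fq'.
apply/inT; exists q' => //; exact: ple_trans pq qq'.
Qed.

Lemma nv_some c : nv = Some c -> [/\ cond, c \in pS X & imm_succ c = alpha].
Proof.
rewrite /nv; case: ifP => // hc; case: pickP => // c' /andP [h1 /eqP h2] [<-]; by split.
Qed.

Lemma nv_none : nv = None -> ~~ cond.
Proof.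
rewrite /nv; case: ifP => // hc; case: pickP => // h _.
case/andP: hc => _ hs.
case: (cover (@minset_anti X T) hs) => s [sS ss].
by move: (h s); rewrite sS ss eqxx.
Qed.

Lemma c_le c y : nv = Some c -> y \in T -> ple c y.
Proof.
move=> /nv_some [_ _ ic] /min_below [a aal ay].
have : a \in imm_succ c by rewrite ic.
move/imm_plt => /andP [_ ca]; exact: ple_trans ca ay.
Qed.

Lemma c_up c y : nv = Some c -> ple c y -> y != c -> y \in T.
Proof.
move=> /nv_some [_ _ ic] cy yc.
have : plt c y by rewrite /plt eq_sym yc cy.
case/imm_below => a; rewrite ic => aal ay.
apply: T_up ay; exact: (subsetP (minset_sub T)).
Qed.

Lemma Inv_step : Inv (p0 |: K) f'.
Proof.
case: HI => Kup KZ fZ fdom fmono fup fS fIV.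
split.
- move=> p q; rewrite !inE => /orP [/eqP ->|pK] pq.
    case: (boolP (q \in K)) => qK; first by apply/orP; right.
    by rewrite (p0max qK pq); apply/orP; left.
  by apply/orP; right; exact: (Kup _ _ pK pq).
- by move=> p zp; rewrite inE; apply/orP; right; exact: KZ.
- move=> p zp; rewrite f'_old ?fZ //; apply/eqP => e1; move: p0K; by rewrite -e1 KZ.
- move=> p x /f'_some [[-> _]|[_ h]]; first exact: setU11.
  by apply/setU1P; right; exact: fdom _ _ h.
- move=> p q x y pq /f'_some [[ep hx]|[np hx]] /f'_some [[eqq hy]|[nq hy]].
  + by move: hx; rewrite hy => [[->]]; exact: ple_refl.
  + apply: c_le hx _; apply/inT; exists q => //; by rewrite -ep.
  + exfalso; move: p0K; rewrite -eqq; apply/negP/negPn; exact: Kup (fdom _ _ hx) pq.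
  + exact: fmono pq hx hy.
- move=> p x y /f'_some [[-> hx]|[np hx]] xy.
    case: (boolP (y == x)) => [/eqP ->|yx]; first by exists p0; rewrite ?ple_refl /f' ?eqxx.
    case/inT: (c_up hx xy yx) => q pq fq; exists q => //; by rewrite f'_old // (fK fq).
  case: (fup _ _ _ hx xy) => q pq fq; exists q => //; by rewrite f'_old // (fK fq).
- move=> p x /f'_some [[-> hx]|[np hx]]; last exact: fS.
  case: (nv_some hx) => /andP [-> _] -> _ //.
- move=> s x y /setU1P [->|sK] sS sx /f'_some [[ex hy]|[nx hy]].
  + exists p0, x; split => //; first exact: ple_refl.
      by rewrite /f' eqxx hy.
    by rewrite ex /f' eqxx.
  + case nvE: nv => [c|].
      exists p0, x; split => //; first exact: ple_refl.
        by rewrite /f' eqxx nvE.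
      by rewrite f'_old.
    have yT : y \in T by apply/inT; exists x.
    case: (min_below yT) => a aal ay.
    have aT : a \in T by apply: (subsetP (minset_sub T)).
    case/inT: aT => qa pqa fqa.
    have aS : a \in pS X.
      move: (nv_none nvE); rewrite /cond sS /= negbK => /subsetP; exact.
    have qaS : qa \in pS Y by rewrite -(fS _ _ fqa).
    case: (fup _ _ _ fqa ay) => x' qax' fx'.
    exists qa, x'; split => //; by rewrite f'_old ?fqa ?(fK fqa) ?(fK fx').
  + exfalso; move: p0K; rewrite -ex; apply/negP/negPn; exact: Kup sK sx.
  + case: (fIV _ _ _ sK sS sx hy) => s' [x'] [h1 h2 h3 h4 h5].
    case fs'E: (f s') h4 => [z|] // _.
    exists s', x'; split => //; by rewrite f'_old ?fs'E ?(fK fs'E) ?(fK h5).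
Qed.

End Step.

Lemma grow n : forall K f, #|~: K| = n -> Inv K f -> exists f, Inv setT f.
Proof.
elim: n => [|n IH] K f hc hI.
  have e0 := cards0_eq hc.
  have eK : K = setT by rewrite -[K]setCK e0 setC0.
  by exists f; rewrite -eK.
have : 0 < #|~: K| by rewrite hc.
case/card_gt0P => q0; rewrite inE => q0K.
have := @exists_max Y (@ple Y) (fun q => q \notin K) q0.
case; [exact: ple_trans | exact: q0K |].
move=> p0 p0K pmax.
have p0max : forall q, q \notin K -> ple p0 q -> q = p0.
  move=> q qK pq; exact: ple_anti (pmax q qK pq) pq.
apply: (IH (p0 |: K) (f' f p0)); last exact: Inv_step.
have : #|~: K| = (p0 \in ~: K) + #|~: (p0 |: K)|.
  rewrite (cardsD1 p0 (~: K)); congr (_ + _); apply: eq_card => z.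
  by rewrite !inE negb_or.
by rewrite hc inE p0K add1n => [[]].
Qed.

Theorem core_section : exists s : dual_ops X -> D, is_hom s /\ forall U, e (s U) = U.
Proof.
have [f HI] := grow (erefl _) Inv0.
have hfh : is_hom (hf f).
  apply: hf_hom; [exact: (iMono HI) | exact: (iUp HI) | exact: (iS HI) |].
  move=> s x y sS sx fx; apply: (iIV HI) sS sx fx; by rewrite inE.
have psih : is_hom (@psi D HD) by apply: inv_hom; [exact: phi_hom | exact: phi_inj | exact: phi_psi].
exists (fun U => psi (hf f U)); split; first exact: hom_comp hfh psih.
move=> U; apply: val_inj; apply/setP => x.
case: (xp_surj x) => p hx.
case: (xp_spec hx) => zp _ _.
have fp : f p = Some x by rewrite (iZ HI zp).
have e2 : phis (psi (hf f U)) = hfs f (val U) by exact: (congr1 val (phi_psi (hf f U))).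
have step1 : (x \in E (psi (hf f U))) = (p \in hfs f (val U)).
  rewrite -e2 in_phis; apply/idP/idP.
    move=> xE; apply/negP => /lebP /(xp_le _ hx) h; by rewrite xE in h.
  move/negP => h; case: (boolP (x \in E _)) => // xnE; exfalso; apply: h.
  apply/lebP; exact/(xp_le _ hx).
rewrite step1; apply/in_hfP/idP => [H|xU q z pq fq].
  exact: H (ple_refl _) fp.
have zq := Zp_up zp pq.
apply: upW xU _; exact: (iMono HI) pq fp fq.
Qed.

End Core.

Section Pullback.
Context {B C : nis_ops} {HB : is_nis B} {HC : is_nis C}.
Variable X : SPoset.
Variables (e : B -> C) (g : dual_ops X -> C).
Hypotheses (eh : is_hom e) (gh : is_hom g).

Definition PBt := {bu : (B * dual_ops X)%type | e bu.1 == g bu.2}.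

Lemma pb_top_p : e (ntop B) == g (ntop (dual_ops X)).
Proof. by case: eh => -> _ _ _; case: gh => -> _ _ _. Qed.

Lemma pb_meet_p (x y : PBt) : e (nmeet (val x).1 (val y).1) == g (nmeet (val x).2 (val y).2).
Proof.
case: eh => _ -> _ _; case: gh => _ -> _ _.
by rewrite (eqP (valP x)) (eqP (valP y)).
Qed.
Lemma pb_imp_p (x y : PBt) : e (nimp (val x).1 (val y).1) == g (nimp (val x).2 (val y).2).
Proof.
case: eh => _ _ -> _; case: gh => _ _ -> _.
by rewrite (eqP (valP x)) (eqP (valP y)).
Qed.
Lemma pb_nuc_p (x : PBt) : e (nnuc (val x).1) == g (nnuc (val x).2).
Proof.
case: eh => _ _ _ ->; case: gh => _ _ _ ->.
by rewrite (eqP (valP x)).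
Qed.

Definition PB : nis_ops :=
  @NisOps PBt
    (exist _ (ntop B, ntop (dual_ops X)) pb_top_p)
    (fun x y => exist _ (nmeet (val x).1 (val y).1, nmeet (val x).2 (val y).2) (pb_meet_p x y))
    (fun x y => exist _ (nimp (val x).1 (val y).1, nimp (val x).2 (val y).2) (pb_imp_p x y))
    (fun x => exist _ (nnuc (val x).1, nnuc (val x).2) (pb_nuc_p x)).

Lemma pb_nle (x y : PB) : nle x y <-> nle (val x).1 (val y).1 /\ nle (val x).2 (val y).2.
Proof.
case: x => [[a u] pa]; case: y => [[b v] pb]; rewrite /nle /=; split.
  by move=> h; have := congr1 val h => /= [[-> ->]].
by case=> h1 h2; apply: val_inj => /=; rewrite h1 h2.
Qed.

Lemma pb_is_nis : is_nis PB.
Proof.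
split.
  by move=> [[a u] ?] [[b v] ?] [[c w] ?]; apply: val_inj; apply: (f_equal2 pair); apply: mA.
split.
  by move=> [[a u] ?] [[b v] ?]; apply: val_inj; apply: (f_equal2 pair); apply: mC.
split.
  by move=> [[a u] ?]; apply: val_inj; apply: (f_equal2 pair); apply: mI.
split.
  by move=> [[a u] ?]; apply: val_inj; apply: (f_equal2 pair); apply: mT.
split.
  move=> x y z; split => /pb_nle [h1 h2]; apply/pb_nle;
    move: h1 h2; case: x => [[a u] ?]; case: y => [[b v] ?]; case: z => [[c w] ?] /= h1 h2.
    by split; apply/adj.
  by split; apply/adj.
split.
  move=> x; apply/pb_nle; case: x => [[a u] ?] /=; split; exact: nuc_ext.
split.
  by move=> [[a u] ?] [[b v] ?]; apply: val_inj; apply: (f_equal2 pair); apply: nuc_meet.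
move=> x; apply/pb_nle; case: x => [[a u] ?] /=; split; exact: nuc_nuc_le.
Qed.

Definition pi1 (x : PB) : B := (val x).1.
Definition pi2 (x : PB) : dual_ops X := (val x).2.

Lemma pi1_hom : is_hom pi1.
Proof. by split. Qed.
Lemma pi2_hom : is_hom pi2.
Proof. by split. Qed.

Hypothesis es : forall c, exists b, e b = c.

Lemma pi2_surj U : exists x : PB, pi2 x = U.
Proof.
case: (es (g U)) => b eb.
have p : e (b, U).1 == g (b, U).2 by rewrite /= eb.
by exists (exist _ (b, U) p).
Qed.

End Pullback.

Theorem proj_of_cover (X : SPoset) :
  (forall a : {set X}, antichain a -> ~~ (a \subset pS X) -> has_cover a) -> projective (dual_ops X).
Proof.
move=> cov B C HB HC e g eh es gh.
have HP := pb_is_nis (HB:=HB) eh gh.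
have [s [sh se]] := @core_section _ HP X _ (pi2_hom eh gh) (pi2_surj eh gh es) cov.
exists (fun U => pi1 (s U)); split; first exact: hom_comp sh (pi1_hom eh gh).
move=> U; have := valP (s U); rewrite -/(pi2 (s U)) se => /eqP.
done.
Qed.

Section Ext.
Variable X : SPoset.
Variable al : {set X}.

Definition upal : {set X} := [set y | [exists a in al, ple a y]].

Definition ple' (o1 o2 : option X) : bool :=
  match o1, o2 with
  | Some x, Some y => ple x y
  | None, Some y => y \in upal
  | None, None => true
  | Some _, None => false
  end.

Lemma ple'_refl o : ple' o o.
Proof. case: o => //= x; exact: ple_refl. Qed.
Lemma ple'_anti o1 o2 : ple' o1 o2 -> ple' o2 o1 -> o1 = o2.
Proof. case: o1 => [x|]; case: o2 => [y|] //= h1 h2; by rewrite (ple_anti h1 h2). Qed.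
Lemma upal_up x y : x \in upal -> ple x y -> y \in upal.
Proof.
rewrite !inE => /existsP [a /andP [aal ax]] xy; apply/existsP; exists a.
by rewrite aal (ple_trans ax xy).
Qed.
Lemma ple'_trans o1 o2 o3 : ple' o1 o2 -> ple' o2 o3 -> ple' o1 o3.
Proof.
case: o1 => [x|]; case: o2 => [y|]; case: o3 => [z|] //=.
  exact: ple_trans.
exact: upal_up.
Qed.

Definition Xe : SPoset :=
  @MkSPoset (option X) ple' ple'_refl ple'_anti ple'_trans
    [set o | if o is Some x then x \in pS X else true].

Definition rs (U : {set Xe}) : {set X} := [set x | Some x \in U].
Lemma rs_up (U : dual_ops Xe) : is_upset (rs (val U)).
Proof.
apply/upsetP => x y; rewrite !inE => h xy; apply: upW h _; exact: xy.
Qed.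
Definition er (U : dual_ops Xe) : dual_ops X := exist _ (rs (val U)) (rs_up U).

Lemma er_hom : is_hom er.
Proof.
split.
- by apply: val_inj; apply/setP => x; rewrite !inE.
- by move=> U V; apply: val_inj; apply/setP => x; rewrite !inE.
- move=> U V; apply: val_inj; apply/setP => x /=; rewrite [in LHS]inE.
  apply/(@in_impP Xe)/(@in_impP X) => H.
    by move=> y xy; rewrite !inE; apply: H.
  move=> [y|] //= xy; have := H y xy; by rewrite !inE.
- move=> U; apply: val_inj; apply/setP => x /=; rewrite [in LHS]inE.
  apply/(@in_nucP Xe)/(@in_nucP X) => H.
    by move=> s sS xs; rewrite inE; apply: H => //; rewrite inE.
  move=> [s|] //=; rewrite inE => sS xs; have := H s sS xs; by rewrite inE.
Qed.

Lemma er_surj U : exists V, er V = U.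
Proof.
have hup : is_upset [set o : Xe | if o is Some x then x \in val U else false].
  apply/upsetP => [[x|] [y|]] //; rewrite !inE //= => h xy; exact: upW h xy.
exists (exist (fun S => is_upset S) _ hup : dual_ops Xe); apply: val_inj; apply/setP => x; by rewrite !inE.
Qed.

Lemma id_hom : is_hom (fun U : dual_ops X => U).
Proof. by split. Qed.

Definition mkU (S : {set X}) (p : is_upset (P:=X) S) : dual_ops X := exist _ S p.

Lemma upal_isup : is_upset upal.
Proof. apply/upsetP => x y; exact: upal_up. Qed.

Lemma up_isup (x : X) : is_upset (P:=X) [set y | ple x y].
Proof. apply/upsetP => a b; rewrite !inE => h ab; exact: ple_trans h ab. Qed.

Lemma U0_isup : is_upset (P:=X) [set x | [exists s in pS X, (s \in upal) && ple s x]].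
Proof.
apply/upsetP => a b; rewrite !inE => /existsP [s /andP [sS /andP [su sa]]] ab.
apply/existsP; exists s; by rewrite sS su (ple_trans sa ab).
Qed.

Hypothesis Hproj : projective (dual_ops X).
Hypothesis alA : antichain al.
Hypothesis alS : ~~ (al \subset pS X).

Theorem cover_of_proj : has_cover al.
Proof.
have [h [hh he]] := Hproj (dual_is_nis Xe) (dual_is_nis X) er_hom er_surj id_hom.
have ha : forall U x, (Some x \in val (h U)) = (x \in val U).
  move=> U x; have := congr1 val (he U) => /= /setP /(_ x); by rewrite inE.
case: hh => ht hm hi hn.
pose ph U := (None : Xe) \in val (h U).
have phT : ph (ntop (dual_ops X)) by rewrite /ph ht inE.
have phM : forall U V, ph (nmeet U V) = ph U && ph V.
  by move=> U V; rewrite /ph hm inE.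
have phI : forall U V, (ph U -> ph V) -> (forall x, x \in upal -> x \in val U -> x \in val V) ->
    ph (nimp U V).
  move=> U V H1 H2; rewrite /ph hi; apply/(@in_impP Xe) => o; case: o => [y|] /= uy.
    by rewrite !ha; apply: H2.
  exact: H1.
have phI' : forall U V, ph (nimp U V) -> forall x, x \in upal -> x \in val U -> x \in val V.
  move=> U V; rewrite /ph hi => /(@in_impP Xe) H x xu xU.
  by have := H (Some x) xu; rewrite !ha => /(_ xU).
have phN : forall U, ph (nnuc U) -> ph U /\ forall x, x \in pS X -> x \in upal -> x \in val U.
  move=> U; rewrite /ph hn => /(@in_nucP Xe) H; split.
    by apply: H => //; rewrite inE.
  by move=> x xS xu; have := H (Some x); rewrite !inE ha => /(_ xS xu).
have phMono : forall U V : dual_ops X, val U \subset val V -> ph U -> ph V.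
  move=> U V sUV pU.
  have : U = nmeet U V by apply: val_inj => /=; apply/esym/setIidPl.
  by move=> eU; move: pU; rewrite eU phM => /andP [].
have step1 : forall V, ph V -> upal \subset val V.
  move=> V pV; apply/subsetP => x xu.
  have eV : nimp (ntop (dual_ops X)) V = V by apply: val_inj => /=; apply: imp_setT (valP V).
  by apply: (phI' (ntop (dual_ops X)) V _ x xu); [rewrite eV | rewrite inE].
have step2 : ~~ ph (mkU upal_isup).
  apply/negP => pA.
  pose U0 := mkU U0_isup.
  have : ph (nnuc U0).
    apply: phMono pA; apply/subsetP => x xu; apply/(@in_nucP X) => s sS xs.
    rewrite inE; apply/existsP; exists s; rewrite sS ple_refl andbT /=.
    exact: upal_up xu xs.
  case/phN => pU0 _.
  have := step1 _ pU0.
  case/subsetPn: alS => a aal anS.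
  have au : a \in upal by rewrite inE; apply/existsP; exists a; rewrite aal ple_refl.
  move/subsetP => /(_ a au); rewrite inE => /existsP [s /andP [sS /andP [su sa]]].
  move: su; rewrite inE => /existsP [a' /andP [a'al a's]].
  have ea : a' = a by apply: alA => //; exact: ple_trans a's sa.
  rewrite ea in a's.
  by move: sS; rewrite -(ple_anti a's sa) => sS; rewrite sS in anS.
case: (@arg_minnP _ (ntop (dual_ops X)) ph (fun U => #|val U|) phT) => G pG Gmin.
have GminS : forall U, ph U -> val G \subset val U.
  move=> U pU; apply/setIidPl.
  have : ph (nmeet G U) by rewrite phM pG pU.
  move/Gmin => /= hc; apply/eqP; rewrite eqEcard subsetIl hc //.
have Gup : upal \subset val G by exact: step1.
have [c cG cnu] : exists2 c, c \in val G & c \notin upal.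
  case: (boolP (val G \subset upal)) => [hG|/subsetPn [c cG cnu]]; last by exists c.
  exfalso; move/negP: step2; apply.
  have -> : mkU upal_isup = G.
    apply: val_inj => /=; apply/eqP; rewrite eqEsubset hG Gup //.
  exact: pG.
have claim : forall x, x \in val G -> x \notin upal -> val G \subset [set y | ple x y].
  move=> x xG xnu; case: (boolP (ph (mkU (up_isup x)))) => hx; first exact: (GminS _ hx).
  exfalso.
  have : ph (nimp (mkU (up_isup x)) (mkU upal_isup)).
    apply: phI => //; by move=> /(negP hx).
  move/GminS => /subsetP /(_ x xG) /(@in_impP X) /(_ x (ple_refl _)).
  by rewrite !inE ple_refl => /(_ isT) hxu; move/negP: xnu; apply; by rewrite inE.
have Gc := claim c cG cnu.
have key : forall y, ple c y -> y = c \/ y \in upal.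
  move=> y cy; case: (boolP (y \in upal)) => yu; first by right.
  left; have yG : y \in val G by exact: upW cG cy.
  move: (claim y yG yu) => /subsetP /(_ c cG); rewrite inE => yc.
  exact: ple_anti.
have cle : forall y, y \in upal -> ple c y.
  move=> y yu; move: (subsetP Gc y (subsetP Gup y yu)); by rewrite inE.
have cS : c \in pS X.
  case: (boolP (c \in pS X)) => // cnS; exfalso.
  have : ph (nnuc (mkU upal_isup)).
    apply: phMono pG; apply/subsetP => y yG; apply/(@in_nucP X) => s sS ys.
    have cs : ple c s by apply: ple_trans ys; move: (subsetP Gc y yG); rewrite inE.
    case: (key s cs) => [esc|//]; by move: cnS; rewrite -esc sS.
  case/phN => hh' _; by move/negP: step2.
exists c; split => //.
apply/setP => y; rewrite inE; apply/idP/idP.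
  case/andP => /andP [ncy cy] /existsPn nz.
  case: (key y cy) => [eyc|]; first by move: ncy; rewrite eyc eqxx.
  rewrite inE => /existsP [a /andP [aal ay]].
  case: (boolP (a == y)) => [/eqP <- //|ny].
  have ca : plt c a.
    rewrite /plt (cle a) ?andbT; last by rewrite inE; apply/existsP; exists a; rewrite aal ple_refl.
    apply/eqP => eca; move: cnu; rewrite eca inE; apply/negP/negPn; apply/existsP; exists a.
    by rewrite aal ple_refl.
  by move: (nz a); rewrite ca /plt ny ay.
move=> yal.
have yu : y \in upal by rewrite inE; apply/existsP; exists y; rewrite yal ple_refl.
apply/andP; split.
  rewrite /plt cle // andbT; apply/eqP => ecy; by rewrite ecy yu in cnu.
apply/existsPn => z; apply/negP => /andP [/andP [ncz cz] /andP [nzy zy]].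
case: (key z cz) => [ezc|zu]; first by move: ncz; rewrite ezc eqxx.
move: zu; rewrite inE => /existsP [a /andP [aal az]].
have eay : a = y by apply: alA => //; exact: ple_trans az zy.
rewrite eay in az.
by move: nzy; rewrite (ple_anti zy az) eqxx.
Qed.

End Ext.

Theorem mainTheorem14 (P : SPoset) :
  projective (dual_ops P) <->
  (forall a : {set P}, antichain a -> ~~ (a \subset pS P) -> has_cover a).
Proof.
split.
- move=> Hp a aA aS; exact: (cover_of_proj Hp aA aS).
- exact: proj_of_cover.
Qed.
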